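(* Let $\gamma>0$, $\Delta\in[0,1)$, $\zeta\in(0,1]$ and suppose $\gamma<\frac{1+\Delta}{\zeta\sigma_{\max}^2}$ and $\frac{(1-\zeta)\gamma}{1-\Delta}\cdot\frac1n\operatorname{tr}(\boldsymbol A\boldsymbol A^T)<1$. Then $\|\mathcal K\|:=\sum_{t=0}^\infty\mathcal K(t)<1$.
   Context: $\boldsymbol A\in\mathbb R^{n\times d}$, $\sigma_1^2\ge\dots\ge\sigma_n^2\ge0$ the eigenvalues of $\boldsymbol A\boldsymbol A^T$, $\sigma_{\max}^2$ the largest. For $j\in[n]$: $\Omega_j=1-\gamma\zeta\sigma_j^2+\Delta$, $\lambda_{2,j},\lambda_{3,j}=\frac{-2\Delta+\Omega_j^2\pm\sqrt{\Omega_j^2(\Omega_j^2-4\Delta)}}{2}$ (complex square root if the argument is negative). The kernel is $\mathcal K(t)=\gamma^2\zeta(1-\zeta)H_2(t)$ with $H_2(t)=\frac1n\sum_{j=1}^n\frac{2\sigma_j^4}{\Omega_j^2-4\Delta}\big(-\Delta^{t+1}+\frac12\lambda_{2,j}^{t+1}+\frac12\lambda_{3,j}^{t+1}\big)$ (terms with $\Omega_j^2=4\Delta$ understood by continuity). *)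

(* Defs.v *)
From HB Require Import structures.
From mathcomp Require Import all_boot all_order all_algebra.
From mathcomp Require Import all_classical all_reals all_analysis.
From mathcomp Require Import complex.
Set Implicit Arguments. Unset Strict Implicit. Unset Printing Implicit Defensive.
Import Order.TTheory GRing.Theory Num.Theory.
Local Open Scope ring_scope.

Definition Omega {R : realType} (gamma zeta Delta s2 : R) : R :=
  1 - gamma * zeta * s2 + Delta.

Definition lam2 {R : realType} (gamma zeta Delta s2 : R) : R[i] :=
  let O := Omega gamma zeta Delta s2 in
  (((- (2 * Delta) + O ^+ 2)%:C + sqrtc ((O ^+ 2 * (O ^+ 2 - 4 * Delta))%:C)) / 2%:R)%C.

Definition lam3 {R : realType} (gamma zeta Delta s2 : R) : R[i] :=
  let O := Omega gamma zeta Delta s2 in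
  (((- (2 * Delta) + O ^+ 2)%:C - sqrtc ((O ^+ 2 * (O ^+ 2 - 4 * Delta))%:C)) / 2%:R)%C.

(* The j-th summand of H_2(t):
     2 sigma^4/(Omega^2 - 4 Delta) * (-Delta^(t+1) + lam2^(t+1)/2 + lam3^(t+1)/2)
   (a real number; we take the real part of the complex expression, whose
   imaginary part vanishes).  In the degenerate case Omega^2 = 4 Delta the value
   is the continuous extension sigma^4 (t+1)^2 Delta^t. *)
Definition H2term {R : realType} (gamma zeta Delta s2 : R) (t : nat) : R :=
  let O := Omega gamma zeta Delta s2 in
  if O ^+ 2 == 4 * Delta then s2 ^+ 2 * (t.+1)%:R ^+ 2 * Delta ^+ t
  else complex.Re (((2 * s2 ^+ 2 / (O ^+ 2 - 4 * Delta))%:C *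
            (- (Delta ^+ t.+1)%:C + lam2 gamma zeta Delta s2 ^+ t.+1 / 2%:R
                                   + lam3 gamma zeta Delta s2 ^+ t.+1 / 2%:R))%C).

Definition H2 {R : realType} (n : nat) (s : 'I_n -> R) (gamma zeta Delta : R)
  (t : nat) : R :=
  n%:R^-1 * \sum_(j < n) H2term gamma zeta Delta (s j) t.

Definition Kker {R : realType} (n : nat) (s : 'I_n -> R) (gamma zeta Delta : R)
  (t : nat) : R :=
  gamma ^+ 2 * zeta * (1 - zeta) * H2 s gamma zeta Delta t.

(* Main.v *)
Require Import Defs.
From HB Require Import structures.
From mathcomp Require Import all_boot all_order all_algebra.
From mathcomp Require Import all_classical all_reals all_analysis.
From mathcomp Require Import complex.
From mathcomp Require Import ring lra.
Import Order.TTheory GRing.Theory Num.Theory numFieldNormedType.Exports.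
Local Open Scope ring_scope.

Local Open Scope classical_set_scope.
Local Open Scope ring_scope.

Lemma sqsum_ge0 (R : realType) m (v : 'rV[R]_m) : 0 <= (v *m v^T) 0 0.
Proof.
rewrite mxE; apply: sumr_ge0 => k _; rewrite mxE; by rewrite -expr2 sqr_ge0.
Qed.

Lemma sqsum_gt0 (R : realType) m (v : 'rV[R]_m) : v != 0 -> 0 < (v *m v^T) 0 0.
Proof.
move=> vn0; rewrite lt_def sqsum_ge0 andbT; apply: contra vn0 => /eqP H.
apply/eqP/rowP => k; rewrite mxE.
have: \sum_(i < m) v 0 i * v 0 i = 0.
  rewrite -[RHS]H mxE; apply: eq_bigr => i _; by rewrite mxE.
move/eqP; rewrite psumr_eq0; last by move=> i _; by rewrite -expr2 sqr_ge0.
move/allP/(_ k (mem_index_enum _)) => /implyP /(_ isT).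
by rewrite mulf_eq0 orbb => /eqP ->.
Qed.

Lemma eig_facts (R : realType) (n d : nat) (A : 'M[R]_(n, d)) (s : 'I_n -> R) :
  (0 < n)%N ->
  char_poly (A *m A^T) = \prod_(j < n) ('X - (s j)%:P) ->
  (forall j, 0 <= s j) /\ \tr (A *m A^T) = \sum_(j < n) s j.
Proof.
move=> n0 hc; split.
  move=> j.
  have : eigenvalue (A *m A^T) (s j).
    rewrite eigenvalue_root_char hc /root horner_prod (bigD1 j) //=.
    by rewrite hornerXsubC subrr mul0r.
  case/eigenvalueP => v hv vn0.
  have e : ((v *m A) *m (v *m A)^T) 0 0 = s j * (v *m v^T) 0 0.
    by rewrite trmx_mul mulmxA -(mulmxA v A) hv -scalemxAl mxE.
  have h1 := @sqsum_ge0 R d (v *m A); have h2 := @sqsum_gt0 R n v vn0.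
  rewrite e in h1; rewrite leNgt; apply/negP => sneg.
  by move: h1; rewrite leNgt (pmulr_llt0 _ h2) sneg.
have := char_poly_trace (A *m A^T) n0.
rewrite hc -(big_map s xpredT (fun x => 'X - x%:P)) -(big_map s xpredT id).
have sz : size [seq s i | i <- index_enum 'I_n] = n.
  by rewrite size_map /index_enum -enumT size_enum_ord.
set ps := [seq s i | i <- index_enum 'I_n].
have -> : n.-1 = (size ps).-1 by rewrite sz.
rewrite coefPn_prod_XsubC ?sz -?lt0n // => /eqP.
by rewrite eqr_opp => /eqP <-.
Qed.

Section An.
Variable R : realType.

Lemma bern (y t : R) N : 0 <= y -> 0 <= t ->
  y ^+ N.+1 + N.+1%:R * y ^+ N * t <= (y + t) ^+ N.+1.
Proof.
move=> y0 t0; elim: N => [|N IH]; first by rewrite !expr1 expr0 mulr1 mul1r.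
have a0 : 0 <= y ^+ N by rewrite exprn_ge0.
rewrite [(y + t) ^+ N.+2]exprS.
have H : (y + t) * (y ^+ N.+1 + N.+1%:R * y ^+ N * t) <= (y + t) * (y + t) ^+ N.+1.
  by rewrite ler_wpM2l // addr_ge0.
apply: le_trans H; rewrite !exprS -!mulrA.
set a := y ^+ N; rewrite -natr1.
have N0 : 0 <= N%:R :> R by [].
have : 0 <= N.+1%:R * (a * (t * t)) by rewrite mulr_ge0 // mulr_ge0 // mulr_ge0.
nra.
Qed.

Lemma nxN (x : R) : 0 <= x < 1 -> (fun N : nat => N%:R * x ^+ N) @ \oo --> 0.
Proof.
case/andP => x0 x1.
set y := Num.sqrt x.
have y0 : 0 <= y by rewrite sqrtr_ge0.
have yy : y ^+ 2 = x by rewrite sqr_sqrtr.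
have y1 : y < 1 by nra.
have bd : forall N : nat, N%:R * y ^+ N <= (1 - y)^-1.
  move=> N; rewrite -div1r ler_pdivlMr ?subr_gt0 //.
  have t0 : 0 <= 1 - y by rewrite subr_ge0 ltW.
  have := @bern y (1 - y) N y0 t0.
  rewrite (addrC y (1 - y)) subrK expr1n.

  have : 0 <= y ^+ N.+1 by rewrite exprn_ge0.
  have : N%:R * y ^+ N * (1 - y) <= N.+1%:R * y ^+ N * (1 - y).
    by apply: ler_wpM2r => //; apply: ler_wpM2r; rewrite ?exprn_ge0 ?ler_nat.
  lra.
apply: (@squeeze_cvgr _ _ _ _ (fun=> 0) (fun N => (1 - y)^-1 * y ^+ N)).
- near=> N; apply/andP; split.
    by rewrite mulr_ge0 // exprn_ge0.
  rewrite -yy -exprM mulnC exprM expr2 mulrA ler_wpM2r ?exprn_ge0 //.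
- exact: cvg_cst.
- rewrite -(mulr0 (1 - y)^-1); apply: cvgMl_tmp; apply: cvg_expr.
  by rewrite ger0_norm.
Unshelve. all: by end_near.
Qed.

Lemma n2xN (x : R) : 0 <= x < 1 -> (fun N : nat => N%:R ^+ 2 * x ^+ N) @ \oo --> 0.
Proof.
case/andP => x0 x1.
set y := Num.sqrt x.
have y0 : 0 <= y by rewrite sqrtr_ge0.
have yy : y ^+ 2 = x by rewrite sqr_sqrtr.
have y1 : y < 1 by nra.
have yc : 0 <= y < 1 by rewrite y0 y1.
have -> : (fun N : nat => N%:R ^+ 2 * x ^+ N) = (fun N : nat => (N%:R * y ^+ N) * (N%:R * y ^+ N)).
  apply: funext => N; rewrite -yy -exprM mulnC exprM; ring.
rewrite -(mulr0 (0 : R)).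
exact (cvgM (@nxN y yc) (@nxN y yc)).
Qed.

Lemma deg_series (x k : R) : 0 <= x < 1 ->
  series (fun t : nat => k * ((t.+1)%:R ^+ 2 * x ^+ t)) @ \oo --> k * (1 + x) / (1 - x) ^+ 3.
Proof.
move=> xc; have /andP[x0 x1] := xc.
have x1' : 1 - x != 0 by rewrite subr_eq0 gt_eqF.
pose e (N : nat) := (1 - x) ^+ 2 * (N%:R ^+ 2 * x ^+ N) + 2 * (1 - x) * (N%:R * x ^+ N) + (1 + x) * x ^+ N.
have E : forall N, \sum_(0 <= t < N) k * ((t.+1)%:R ^+ 2 * x ^+ t) = k * ((1 + x) - e N) / (1 - x) ^+ 3.
  elim => [|N IH].
    rewrite big_geq // /e !expr0; ring.
  rewrite big_nat_recr //= IH /e -!natr1 !exprS; field.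
  by [].
have -> : series (fun t : nat => k * ((t.+1)%:R ^+ 2 * x ^+ t)) = (fun N => k * ((1 + x) - e N) / (1 - x) ^+ 3).
  by apply: funext => N; rewrite /series /= E.
apply: cvgMr_tmp; apply: cvgMl_tmp.
rewrite -[X in _ --> X]subr0; apply: cvgB; first exact: cvg_cst.
suff H : e @ \oo --> ((1 - x) ^+ 2 * 0 + 2 * (1 - x) * 0 + (1 + x) * 0).
  by rewrite !mulr0 !addr0 in H.
apply: cvgD; first apply: cvgD.
- exact: cvgMl_tmp (@n2xN x xc).
- exact: cvgMl_tmp (@nxN x xc).
- apply: cvgMl_tmp; apply: cvg_expr; by rewrite ger0_norm.
Qed.

End An.

Section C.
Variable R : realType.
Implicit Types x y : R[i].

Lemma ReD x y : complex.Re (x + y) = complex.Re x + complex.Re y.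
Proof. by case: x => a b; case: y. Qed.
Lemma ImD x y : complex.Im (x + y) = complex.Im x + complex.Im y.
Proof. by case: x => a b; case: y. Qed.
Lemma ReN x : complex.Re (- x) = - complex.Re x.
Proof. by case: x. Qed.
Lemma ImN x : complex.Im (- x) = - complex.Im x.
Proof. by case: x. Qed.
Lemma ReM x y : complex.Re (x * y) = complex.Re x * complex.Re y - complex.Im x * complex.Im y.
Proof. by case: x => a b; case: y. Qed.
Lemma ImM x y : complex.Im (x * y) = complex.Re x * complex.Im y + complex.Im x * complex.Re y.
Proof. by case: x => a b; case: y. Qed.
Lemma ReB x y : complex.Re (x - y) = complex.Re x - complex.Re y.
Proof. by case: x => a b; case: y. Qed.
Lemma ReC (a : R) : complex.Re (a%:C)%C = a. Proof. by []. Qed.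
Lemma ImC (a : R) : complex.Im (a%:C)%C = 0. Proof. by []. Qed.
Lemma div2C x : x / 2%:R = x * ((2%:R)^-1 : R)%:C%C.
Proof. by rewrite fmorphV /= rmorph_nat. Qed.
Lemma Re_sum N (F : nat -> R[i]) : complex.Re (\sum_(t < N) F t) = \sum_(t < N) complex.Re (F t).
Proof. elim: N => [|N IH]; first by rewrite !big_ord0.
by rewrite !big_ord_recr /= ReD IH. Qed.

Lemma abs_le_nm (u v : R) : `|u| <= Num.sqrt (u ^+ 2 + v ^+ 2).
Proof. by rewrite -sqrtr_sqr ler_wsqrtr // lerDl sqr_ge0. Qed.

Lemma nm_pow x M : Num.sqrt (complex.Re (x ^+ M) ^+ 2 + complex.Im (x ^+ M) ^+ 2)
  = Num.sqrt (complex.Re x ^+ 2 + complex.Im x ^+ 2) ^+ M.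
Proof.
apply: (@complexI R).
by rewrite rmorphXn /= -!normc_def normrX.
Qed.


Lemma ReCvg (b x : R[i]) : complex.Re x ^+ 2 + complex.Im x ^+ 2 < 1 ->
  (fun N : nat => complex.Re (b * x ^+ N.+1)) @ \oo --> 0.
Proof.
move=> h.
set r := Num.sqrt (complex.Re x ^+ 2 + complex.Im x ^+ 2).
have r0 : 0 <= r by rewrite sqrtr_ge0.
have r1 : r < 1.
  have rr : r ^+ 2 = complex.Re x ^+ 2 + complex.Im x ^+ 2.
    by rewrite sqr_sqrtr // addr_ge0 // sqr_ge0.
  nra.
set K := `|complex.Re b| + `|complex.Im b|.
apply/norm_cvg0P.
apply: (@squeeze_cvgr _ _ _ _ (fun=> 0) (fun N => K * r ^+ N)).
- near=> N; apply/andP; split => //.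
  rewrite ReM.
  have e1 := abs_le_nm (complex.Re (x ^+ N.+1)) (complex.Im (x ^+ N.+1)).
  have e2 := abs_le_nm (complex.Im (x ^+ N.+1)) (complex.Re (x ^+ N.+1)).
  rewrite addrC in e2.
  rewrite nm_pow -/r in e1 e2.
  have e3 : r ^+ N.+1 <= r ^+ N.
    by rewrite exprS ler_piMl ?exprn_ge0 // ltW.
  apply: (le_trans (ler_normB _ _)).
  rewrite !normrM /K mulrDl.
  apply: lerD; apply: ler_pM => //; apply: (le_trans _ e3) => //.
- exact: cvg_cst.
- rewrite -(mulr0 K); apply: cvgMl_tmp; apply: cvg_expr.
  by rewrite ger0_norm.
Unshelve. all: by end_near.
Qed.

Lemma C_neq0 (a : R) : a != 0 -> (a%:C)%C != 0 :> R[i].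
Proof. by move=> h; apply/eqP => -[] /eqP; rewrite (negbTE h). Qed.

Lemma two_neq0 : (2%:R : R[i]) != 0.
Proof. by rewrite pnatr_eq0. Qed.

Lemma sumC (D l2 l3 c : R[i]) N : 1 - D != 0 -> 1 - l2 != 0 -> 1 - l3 != 0 ->
 \sum_(t < N) c * (- D ^+ t.+1 + l2 ^+ t.+1 / 2%:R + l3 ^+ t.+1 / 2%:R)
 = c * (- D / (1 - D) + (l2 / (1 - l2) + l3 / (1 - l3)) / 2%:R)
   - ((- c / (1 - D)) * D ^+ N.+1 + (c / (2%:R * (1 - l2))) * l2 ^+ N.+1
      + (c / (2%:R * (1 - l3))) * l3 ^+ N.+1).
Proof.
move=> hD h2 h3; have h := two_neq0.
elim: N => [|N IH].
  rewrite big_ord0 !expr1; field; by rewrite hD h2 h3.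
rewrite big_ord_recr /= IH !(exprS _ N.+1); field; by rewrite ?h hD h2 h3.
Qed.

Lemma nondeg (g z D s2 : R) : 0 < g -> 0 <= D < 1 -> 0 < z -> 0 < s2 ->
  g * (z * s2) < 1 + D -> Omega g z D s2 ^+ 2 != 4 * D ->
  series (H2term g z D s2) @ \oo -->
    s2 ^+ 2 * (1 + D) / ((1 - D) * ((1 + D) ^+ 2 - Omega g z D s2 ^+ 2)).
Proof.
move=> g0 /andP[D0 D1] z0 s0 hx hO.
have x0 : 0 < g * z * s2 by rewrite !mulr_gt0.
have OE : Omega g z D s2 = 1 - g * z * s2 + D by [].
set O := Omega g z D s2 in hO OE *.
have O0 : 0 < O by rewrite OE; rewrite mulrA in hx; lra.
have O1 : O < 1 + D by rewrite OE; lra.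
set c := 2 * s2 ^+ 2 / (O ^+ 2 - 4 * D).
set a := - (2 * D) + O ^+ 2.
set zz := O ^+ 2 * (O ^+ 2 - 4 * D).
set w := sqrtc (zz%:C)%C.
have ww : w * w = (zz%:C)%C by rewrite -expr2 sqr_sqrtc.
set l2 := lam2 g z D s2.
set l3 := lam3 g z D s2.
have l2E : l2 = ((a%:C)%C + w) / 2%:R by [].
have l3E : l3 = ((a%:C)%C - w) / 2%:R by [].
set p := complex.Re w.
set q := complex.Im w.
have pq1 : p * p - q * q = zz.
  by have := congr1 (@complex.Re R) ww; rewrite ReM.
have pq2 : p * q = 0.
  have := congr1 (@complex.Im R) ww; rewrite ImM ImC => h.
  rewrite [q * p]mulrC in h; lra.
have Rel2 : complex.Re l2 = (a + p) / 2.
  by rewrite l2E div2C ReM ImD ReD -/p -/q /= mulr0 subr0.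
have Iml2 : complex.Im l2 = q / 2.
  by rewrite l2E div2C ImM ImD ReD -/p -/q /= mulr0 add0r add0r.
have Rel3 : complex.Re l3 = (a - p) / 2.
  by rewrite l3E div2C ReM ImD ReD ReN ImN -/p -/q /= mulr0 subr0.
have Iml3 : complex.Im l3 = - q / 2.
  by rewrite l3E div2C ImM ImD ReD ImN ReN -/p -/q /= mulr0 add0r add0r.
have az : a * a - zz = 4 * (D * D) by rewrite /a /zz; ring.
have b1 : (2 - a) * (2 - a) - zz = 4 * ((1 + D) * (1 + D) - O * O) by rewrite /a /zz; ring.
have b2 : (2 + a) * (2 + a) - zz = 4 * ((1 - D) * (1 - D) + O * O) by rewrite /a /zz; ring.
have OO : O * O < (1 + D) * (1 + D) by nra.
have a2 : 0 < 2 - a by rewrite /a; nra.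
have a3 : 0 < 2 + a by rewrite /a; nra.
have pq : p = 0 \/ q = 0.
  by move/eqP: pq2; rewrite mulf_eq0 => /orP[/eqP|/eqP]; [left|right].
have pb : q = 0 -> `|p| < 2 - a /\ `|p| < 2 + a.
  move=> q0; rewrite q0 mulr0 subr0 in pq1.
  have h1 : p * p < (2 - a) * (2 - a) by nra.
  have h2 : p * p < (2 + a) * (2 + a) by nra.
  by split; rewrite ltr_norml; apply/andP; split; nra.
have nm2 : complex.Re l2 ^+ 2 + complex.Im l2 ^+ 2 < 1.
  rewrite Rel2 Iml2.
  case: pq => [p0|q0].
    rewrite p0 mul0r sub0r in pq1.
    have : (a * a + q * q) = 4 * (D * D) by lra.
    rewrite p0 addr0 !expr2; nra.
  have [h1 h2] := pb q0; rewrite q0 mul0r expr0n /= addr0 expr2.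
  move: h1 h2; rewrite !ltr_norml; nra.
have nm3 : complex.Re l3 ^+ 2 + complex.Im l3 ^+ 2 < 1.
  rewrite Rel3 Iml3.
  case: pq => [p0|q0].
    rewrite p0 mul0r sub0r in pq1.
    have : (a * a + q * q) = 4 * (D * D) by lra.
    rewrite p0 subr0 !expr2; nra.
  have [h1 h2] := pb q0; rewrite q0 oppr0 mul0r expr0n /= addr0 expr2.
  move: h1 h2; rewrite !ltr_norml; nra.
have ne1 : forall l : R[i], complex.Re l ^+ 2 + complex.Im l ^+ 2 < 1 -> 1 - l != 0.
  move=> l hl; rewrite subr_eq0; apply/eqP => e; rewrite -e /= in hl.
  by move: hl; rewrite expr1n expr0n /= addr0 ltxx.
have n2 := ne1 _ nm2; have n3 := ne1 _ nm3.
have nD : complex.Re (D%:C)%C ^+ 2 + complex.Im (D%:C)%C ^+ 2 < 1.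
  by rewrite /= expr0n /= addr0 expr2; nra.
have nd := ne1 _ nD.
have aE : a = - (2 * D) + O ^+ 2 by [].
clearbody zz a.
have hsum : l2 + l3 = (a%:C)%C.
  by rewrite l2E l3E; field.
have hprod : l2 * l3 = ((D ^+ 2)%:C)%C.
  have -> : l2 * l3 = ((a%:C)%C * (a%:C)%C - w * w) / (2%:R * 2%:R).
    by rewrite l2E l3E; field.
  rewrite ww.
  have -> : (a%:C)%C * (a%:C)%C - (zz%:C)%C = ((4 * (D * D))%:C)%C :> R[i].
    by rewrite -az rmorphB rmorphM.
  by rewrite rmorphM rmorph_nat rmorphXn rmorphM expr2; field.
have Ht : forall t, H2term g z D s2 t = complex.Re ((c%:C)%C * (- (D%:C)%C ^+ t.+1 + l2 ^+ t.+1 / 2%:R + l3 ^+ t.+1 / 2%:R)).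
  move=> t; rewrite /H2term; cbv zeta; rewrite -/O (negbTE hO) -/c -/l2 -/l3 rmorphXn //.
have cE : c = 2 * s2 ^+ 2 / (O ^+ 2 - 4 * D) by [].
clearbody c.
pose G := (c%:C)%C * (- (D%:C)%C / (1 - (D%:C)%C) + (l2 / (1 - l2) + l3 / (1 - l3)) / 2%:R).
pose E (N : nat) := (- (c%:C)%C / (1 - (D%:C)%C)) * (D%:C)%C ^+ N.+1 + ((c%:C)%C / (2%:R * (1 - l2))) * l2 ^+ N.+1
      + ((c%:C)%C / (2%:R * (1 - l3))) * l3 ^+ N.+1.
have Sn : series (H2term g z D s2) = (fun N => complex.Re G - complex.Re (E N)).
  apply: funext => N.
  have -> : series (H2term g z D s2) N = \sum_(k < N) H2term g z D s2 k by rewrite seriesEord.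
  under eq_bigr do rewrite Ht.
  rewrite -(Re_sum N (fun t => (c%:C)%C * (- (D%:C)%C ^+ t.+1 + l2 ^+ t.+1 / 2%:R + l3 ^+ t.+1 / 2%:R))).
  by rewrite sumC // ReB.
have EN : (fun N => complex.Re (E N)) @ \oo --> 0.
  rewrite /E; under eq_fun do rewrite !ReD.
  rewrite -(addr0 0) -{1}(addr0 0).
  apply: cvgD; first apply: cvgD.
  - exact: ReCvg.
  - exact: ReCvg.
  - exact: ReCvg.
have GE : complex.Re G = c * (- D / (1 - D) + ((a - 2 * (D ^+ 2)) / (1 - a + D ^+ 2)) / 2).
  rewrite /G.
  have -> : l2 / (1 - l2) + l3 / (1 - l3) = (l2 + l3 - 2%:R * (l2 * l3)) / (1 - (l2 + l3) + l2 * l3).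
    have -> : 1 - (l2 + l3) + l2 * l3 = (1 - l2) * (1 - l3) by ring.
    by field; rewrite n2 n3.
  rewrite hsum hprod.
  rewrite -[RHS]/(complex.Re ((c * (- D / (1 - D) + ((a - 2 * (D ^+ 2)) / (1 - a + D ^+ 2)) / 2))%:C)%C).
  congr complex.Re.
  rewrite !(rmorphM, rmorphD, rmorphB, rmorphN, fmorphV, rmorph1, rmorph_nat, rmorphXn).
  field.
  have h1 : 1 - a + D * D != 0 by rewrite aE; apply/lt0r_neq0; nra.
  have h2 : 1 - D != 0 by apply/lt0r_neq0; lra.
  have := @C_neq0 _ h1; have := @C_neq0 _ h2.
  rewrite !(rmorphM, rmorphD, rmorphB, rmorphN, rmorph1) => -> ->; done.
have hD2 : (1 + D) ^+ 2 - O ^+ 2 != 0 by apply/lt0r_neq0; nra.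
have hD1 : 1 - D != 0 by apply/lt0r_neq0; lra.
have hD3 : 1 - a + D ^+ 2 != 0 by rewrite aE; apply/lt0r_neq0; nra.
have hO4 : O ^+ 2 - 4 * D != 0 by rewrite subr_eq0.
rewrite Sn.
have -> : complex.Re G = s2 ^+ 2 * (1 + D) / ((1 - D) * ((1 + D) ^+ 2 - O ^+ 2)).
  rewrite GE cE.
  rewrite aE in hD3 *.
  by field; rewrite hD2 hD1 hO4.
have h := cvgB (@cvg_cst _ (s2 ^+ 2 * (1 + D) / ((1 - D) * ((1 + D) ^+ 2 - O ^+ 2))) nat \oo _) EN.
rewrite subr0 in h; exact: h.
Qed.
End C.

Lemma cvg_sumj (R : realType) n (f : 'I_n -> nat -> R) (l : 'I_n -> R) :
  (forall j, f j @ \oo --> l j) -> (fun N => \sum_j f j N) @ \oo --> \sum_j l j.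
Proof.
move=> h; apply: cvg_big => //; exact: add_continuous.
Qed.
Lemma lemax (R : realType) n (s : 'I_n -> R) j : s j <= \big[Num.max/0]_(i < n) s i.
Proof.
by rewrite (bigD1 j) //= le_max lexx.
Qed.


Lemma Hj (R : realType) (g z D s2 : R) : 0 < g -> 0 <= D < 1 -> 0 < z -> 0 <= s2 ->
  g * (z * s2) < 1 + D ->
  series (H2term g z D s2) @ \oo -->
    s2 ^+ 2 * (1 + D) / ((1 - D) * ((1 + D) ^+ 2 - Omega g z D s2 ^+ 2)).
Proof.
move=> g0 Dc z0 s0 hx; have /andP[D0 D1] := Dc.
have [s2z|s2p] := eqVneq s2 0.
  have H0 : H2term g z D s2 = fun=> 0.
    apply: funext => t; rewrite /H2term; cbv zeta; rewrite s2z.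
    case: ifP => _; first by rewrite expr0n /= !mul0r.
    by rewrite expr0n /= mulr0 mul0r mul0r.
  rewrite H0 s2z expr0n /= !mul0r.
  have -> : series (fun=> 0 : R) = fun=> 0.
    by apply: funext => N; rewrite seriesEord /= big1.
  exact: cvg_cst.
have s0' : 0 < s2 by rewrite lt_def s2p.
have [hO|hO] := eqVneq (Omega g z D s2 ^+ 2) (4 * D); last exact: nondeg.
have -> : H2term g z D s2 = fun t : nat => s2 ^+ 2 * ((t.+1)%:R ^+ 2 * D ^+ t).
  apply: funext => t; rewrite /H2term; cbv zeta; rewrite hO eqxx; ring.
rewrite hO.
have -> : s2 ^+ 2 * (1 + D) / ((1 - D) * ((1 + D) ^+ 2 - 4 * D)) = s2 ^+ 2 * (1 + D) / (1 - D) ^+ 3.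
  have h1 : 1 - D != 0 by apply/lt0r_neq0; lra.
  field; rewrite h1 /=; apply/lt0r_neq0; nra.
exact: deg_series.
Qed.

Theorem proposition2 (R : realType) (n d : nat) (A : 'M[R]_(n, d))
  (s : 'I_n -> R) (gamma Delta zeta : R) :
  (0 < n)%N ->
  char_poly (A *m A^T) = \prod_(j < n) ('X - (s j)%:P) ->
  0 < gamma -> 0 <= Delta < 1 -> 0 < zeta <= 1 ->
  (* gamma < (1+Delta)/(zeta sigma_max^2), cleared of the denominator *)
  gamma * (zeta * \big[Num.max/0]_(j < n) s j) < 1 + Delta ->
  (1 - zeta) * gamma / (1 - Delta) * (n%:R^-1 * \tr (A *m A^T)) < 1 ->
  cvgn (series (Kker s gamma zeta Delta)) /\
  limn (series (Kker s gamma zeta Delta)) < 1.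
Proof.
move=> n0 hc g0 Dc /andP[z0 z1] hmax htr.
have /andP[D0 D1] := Dc.
have [s0 trE] := @eig_facts R n d A s n0 hc.
have hxj : forall j, gamma * (zeta * s j) < 1 + Delta.
  move=> j; apply: le_lt_trans hmax.
  by rewrite ler_pM2l // ler_pM2l // (@lemax R n s j).
pose V j := s j ^+ 2 * (1 + Delta) / ((1 - Delta) * ((1 + Delta) ^+ 2 - Omega gamma zeta Delta (s j) ^+ 2)).
pose K0 := gamma ^+ 2 * zeta * (1 - zeta).
have SE : series (Kker s gamma zeta Delta) =
    (fun N => K0 * (n%:R^-1 * \sum_j series (H2term gamma zeta Delta (s j)) N)).
  apply: funext => N; rewrite !seriesEord /= /Kker /H2.
  rewrite -mulr_sumr -mulr_sumr; congr (_ * (_ * _)).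
  rewrite exchange_big; apply: eq_bigr => j _; by rewrite seriesEord.
have L : series (Kker s gamma zeta Delta) @ \oo --> K0 * (n%:R^-1 * \sum_j V j).
  rewrite SE; apply: cvgMl_tmp; apply: cvgMl_tmp; apply: cvg_sumj => j.
  exact: Hj.
split; first by apply/cvg_ex; exists (K0 * (n%:R^-1 * \sum_j V j)).
rewrite (cvg_lim _ L) //.
apply: le_lt_trans htr.
set C := (1 - zeta) * gamma / (1 - Delta).
have hV : forall j, K0 * V j <= C * s j.
  move=> j; have [sz|sp] := eqVneq (s j) 0.
    by rewrite /V sz expr0n /= !mul0r mulr0 mulr0.
  have sp' : 0 < s j by rewrite lt_def sp s0.
  have x0 : 0 < gamma * zeta * s j by rewrite !mulr_gt0.
  have hx := hxj j; rewrite mulrA in hx.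
  have OE : Omega gamma zeta Delta (s j) = 1 - gamma * zeta * s j + Delta by [].
  have e : K0 * V j = C * s j * ((1 + Delta) / (2 * (1 + Delta) - gamma * zeta * s j)).
    rewrite /V /K0 /C OE.
    have h1 : 1 - Delta != 0 by apply/lt0r_neq0; lra.
    have h2 : 2 * (1 + Delta) - gamma * zeta * s j != 0 by apply/lt0r_neq0; lra.
    have h3 : (1 + Delta) ^+ 2 - (1 - gamma * zeta * s j + Delta) ^+ 2 != 0.
      by apply/lt0r_neq0; nra.
    field.
    by rewrite h1 h2 h3.
  rewrite e; apply: ler_piMr.
    rewrite mulr_ge0 ?(ltW sp') // /C divr_ge0 // ?mulr_ge0 ?subr_ge0 // ltW //.
  have h2 : 0 < 2 * (1 + Delta) - gamma * zeta * s j by lra.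
  by rewrite ler_pdivrMr // mul1r; lra.
rewrite trE.
have -> : K0 * (n%:R^-1 * \sum_j V j) = n%:R^-1 * \sum_j (K0 * V j).
  by rewrite -mulr_sumr mulrCA.
have -> : C * (n%:R^-1 * \sum_j s j) = n%:R^-1 * \sum_j (C * s j).
  by rewrite -mulr_sumr mulrCA.
apply: ler_wpM2l; first by rewrite invr_ge0.
by apply: ler_sum => j _; exact: hV.
Qed.
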